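(* Let $q\geq 2$ and $N,n$ be positive integers. Then $f_{q,q-1}(N)\leq n$ if and only if $F_{q,q-1}(n)\geq N$.
   Context: $[n]=\{1,\dots,n\}$. An ordered complete graph on $N$ vertices is the complete graph on $[N]$ with its natural order; a path in it is monotone if its vertices, in traversal order, are strictly increasing; its length is its number of vertices. For a $q$-edge-colored ordered complete graph $K$ (colors in $[q]$), $f_{q,r}(K)$ is the maximum length of a monotone path in $K$ whose edges use at most $r$ colors, and $f_{q,r}(N)$ is the minimum of $f_{q,r}(K)$ over all $q$-edge-colored ordered complete graphs $K$ on $N$ vertices. For $x,y\in\mathbb{R}^q$, $x<_r y$ means there are at least $r$ coordinates $i$ with $x_i<y_i$; $F_{q,r}(n)$ is the maximum $N$ such that there exist $x_1,\dots,x_N\in[n]^q$ with $x_a<_r x_b$ for all $a<b$. *)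

(* Defs.v *)
From mathcomp Require Import all_boot.
Set Implicit Arguments. Unset Strict Implicit. Unset Printing Implicit Defensive.

(* Vertices of the ordered complete graph on [N] are 'I_N (i.e. 0..N-1, with
   the natural order; shift by one from the paper).
   A q-edge-colouring assigns to every edge {a,b} with a < b the colour
   c (a, b); the values c (a, b) for a >= b are irrelevant. *)
Definition coloring (q N : nat) := {ffun 'I_N * 'I_N -> 'I_q}.

Definition path_colors (q N : nat) (c : coloring q N) (s : seq 'I_N) : seq 'I_q :=
  [seq c e | e <- zip s (behead s)].

Definition good_path (q r N : nat) (c : coloring q N) (s : seq 'I_N) : bool :=
  sorted (fun a b : 'I_N => (a < b)%N) s && (size (undup (path_colors c s)) <= r).

(* f_{q,r}(K): maximum length (number of vertices) of such a path.  A
   monotone path in K_N has at most N vertices. *)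
Definition f_K (q r N : nat) (c : coloring q N) : nat :=
  \max_(k < N.+1 | [exists s : k.-tuple 'I_N, good_path r c s]) k.

Definition f_N (q r N : nat) : nat :=
  \big[minn/N]_(c : coloring q N) f_K r c.

Definition lt_r (q n r : nat) (x y : {ffun 'I_q -> 'I_n}) : bool :=
  (r <= #|[set i | x i < y i]|)%N.

Definition r_chain (q n r N : nat) (x : N.-tuple {ffun 'I_q -> 'I_n}) : bool :=
  [forall a : 'I_N, forall b : 'I_N, (a < b)%N ==> lt_r r (tnth x a) (tnth x b)].

(* F_{q,r}(n): the maximum such N.  For r >= 1 the x_a are pairwise distinct,
   so N <= #|[n]^q| = n^q and the maximum is attained below this bound. *)
Definition F_N (q r n : nat) : nat :=
  \max_(N < (n ^ q).+1 | [exists x : N.-tuple {ffun 'I_q -> 'I_n}, r_chain r x]) N.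

(* Main.v *)
Require Import Defs.
From mathcomp Require Import all_boot.
From mathcomp Require Import zify.
Set Implicit Arguments. Unset Strict Implicit. Unset Printing Implicit Defensive.

Lemma maxex m (P : pred 'I_m) N : 0 < N -> N <= \max_(k < m | P k) k ->
  exists k : 'I_m, P k && (N <= k).
Proof.
move=> N0 HN; case: (boolP [exists k, P k && (N <= k)]) => [/existsP//|/existsP H].
have : \max_(k < m | P k) k <= N.-1.
  apply/bigmax_leqP => k Pk; case: (leqP N k) => Hk.
    by exfalso; apply: H; exists k; rewrite Pk Hk.
  lia.
lia.
Qed.

Lemma size_sorted N (s : seq 'I_N) : sorted (fun a b : 'I_N => (a < b)%N) s -> size s <= N.
Proof.
move=> Hs; have U : uniq s.
  apply: (sorted_uniq _ _ Hs) => [x y z|x]; [exact: ltn_trans | exact: ltnn].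
rewrite -[X in _ <= X](size_enum_ord N); apply: uniq_leq_size => // x _.
by rewrite mem_enum.
Qed.

Lemma pc_cons2 q N (c : coloring q N) x z s :
  path_colors c [:: x, z & s] = c (x, z) :: path_colors c (z :: s).
Proof. by []. Qed.

Lemma pc_rcons q N (c : coloring q N) x s b :
  path_colors c (rcons (x :: s) b) = rcons (path_colors c (x :: s)) (c (last x s, b)).
Proof.
elim: s x => [|z s IH] x //.
rewrite rcons_cons.
have -> : path_colors c (x :: rcons (z :: s) b) = c (x, z) :: path_colors c (rcons (z :: s) b) by [].
by rewrite IH pc_cons2.
Qed.

Section Fwd.
Variables (q N n : nat) (c : coloring q N).
Hypothesis q1 : 1 <= q.
Hypothesis n0 : 0 < n.
Hypothesis fK : f_K (q - 1) c <= n.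

Definition endsat (v : 'I_N) (s : seq 'I_N) := (0 < size s) && (last v s == v).
Definition Lp (i : 'I_q) (v : 'I_N) (s : seq 'I_N) :=
  [&& sorted (fun a b : 'I_N => (a < b)%N) s, endsat v s & i \notin path_colors c s].
Definition L v i := \max_(k < N.+1 | [exists t : k.-tuple 'I_N, Lp i v t]) k.

Lemma L_ge i v s : Lp i v s -> size s <= L v i.
Proof.
move=> H; have Hs : size s < N.+1.
  by rewrite ltnS; apply: size_sorted; case/and3P: H.
apply: (@leq_bigmax_cond _ _ (fun k : 'I_N.+1 => nat_of_ord k) (Ordinal Hs)).
by apply/existsP; exists (in_tuple s).
Qed.

Lemma Lp1 i v : Lp i v [:: v].
Proof. by rewrite /Lp /endsat /= eqxx. Qed.

Lemma L_pos i v : 0 < L v i.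
Proof. exact: (L_ge (Lp1 i v)). Qed.

Lemma L_wit i v : exists s, Lp i v s /\ size s = L v i.
Proof.
have [k /andP[/existsP[t Ht] Hk]] := maxex (L_pos i v) (leqnn _).
exists t; split => //; apply/eqP; rewrite eqn_leq L_ge // size_tuple //.
Qed.

Lemma undup_small i (cs : seq 'I_q) : i \notin cs -> size (undup cs) <= q - 1.
Proof.
move=> Hi.
have -> : q - 1 = size (enum (predC1 i)).
  by rewrite -cardE cardC1 card_ord; lia.
apply: uniq_leq_size; first exact: undup_uniq.
move=> x; rewrite mem_undup mem_enum /= => Hx.
by apply/eqP => E; move: Hi; rewrite -E Hx.
Qed.

Lemma L_le i v : L v i <= n.
Proof.
apply/bigmax_leqP => k /existsP[t /and3P[So _ Hc]].
apply: leq_trans fK.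
apply: (@leq_bigmax_cond _ _ (fun k : 'I_N.+1 => nat_of_ord k) (Ordinal (ltn_ord k))).
apply/existsP; exists t; rewrite /good_path So /=.
exact: undup_small Hc.
Qed.

Lemma L_step (a b : 'I_N) i : a < b -> i != c (a, b) -> L a i < L b i.
Proof.
move=> ab ic; have [s [Hs <-]] := L_wit i a.
suff : Lp i b (rcons s b) by move/L_ge; rewrite size_rcons.
case/and3P: Hs => So /andP[Sz La] Hc.
case: s So Sz La Hc => [//|x s] So _ /eqP /= La Hc.
rewrite /Lp /endsat /= -rcons_cons last_rcons eqxx /=.
rewrite pc_rcons La mem_rcons inE negb_or ic Hc /= andbT.
rewrite rcons_path; move: So => /= ->; by rewrite La.
Qed.

Lemma Xlt v i : (L v i).-1 < n.
Proof. have := L_le i v; have := L_pos i v; lia. Qed.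

Definition X v : {ffun 'I_q -> 'I_n} := [ffun i => Ordinal (Xlt v i)].

Lemma X_val v i : val (X v i) = (L v i).-1.
Proof. by rewrite ffunE. Qed.

Lemma X_chain : r_chain (q - 1) (mktuple X).
Proof.
apply/forallP => a; apply/forallP => b; apply/implyP => ab.
rewrite !tnth_mktuple /lt_r.
have <- : #|[set~ c (a, b)]| = q - 1 by rewrite cardsC1 card_ord; lia.
apply: subset_leq_card; apply/subsetP => i; rewrite !inE => ic.
rewrite !X_val; have := L_step ab ic; have := L_pos i a; lia.
Qed.

End Fwd.

Lemma chain_bound q n r N (x : N.-tuple {ffun 'I_q -> 'I_n}) :
  0 < r -> r_chain r x -> N <= n ^ q.
Proof.
move=> r0 /forallP H.
have inj : injective (tnth x).
  have key : forall a b : 'I_N, a < b -> tnth x a != tnth x b.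
    move=> a b ab; have := H a => /forallP /(_ b) /implyP /(_ ab).
    rewrite /lt_r => Hc.
    have : [set i | tnth x a i < tnth x b i] != set0.
      by rewrite -card_gt0; exact: leq_trans Hc.
    case/set0Pn => i; rewrite inE => Hi; apply/eqP => E.
    by rewrite E ltnn in Hi.
  move=> a b E; case: (ltngtP a b) => ab.
  - by move: (key _ _ ab); rewrite E eqxx.
  - by move: (key _ _ ab); rewrite E eqxx.
  - exact: val_inj.
have := @leq_card _ _ _ inj; by rewrite card_ffun !card_ord.
Qed.

Lemma fwd q N n : 2 <= q -> 0 < n -> f_N q (q - 1) N <= n -> N <= F_N q (q - 1) n.
Proof.
move=> q2 n0 HfN.
have [c Hc] : exists c : coloring q N, f_K (q - 1) c <= n.
  have i0 : 'I_q := Ordinal (leq_trans (isT : 0 < 2) q2).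
  pose c0 : coloring q N := [ffun=> i0].
  move: HfN; rewrite /f_N.
  elim/big_ind: _ => [HN|x y Hx Hy|c _ Hc]; last by exists c.
  - exists c0; apply: leq_trans HN.
    apply/bigmax_leqP => k _; exact: leq_ord.
  - by rewrite geq_min => /orP[/Hx|/Hy].
have q1 : 1 <= q by lia.
have Ch := X_chain q1 n0 Hc.
have HN : N < (n ^ q).+1 by rewrite ltnS; apply: (chain_bound _ Ch); lia.
apply: (@leq_bigmax_cond _ _ (fun k : 'I_(n ^ q).+1 => nat_of_ord k) (Ordinal HN)).
by apply/existsP; exists (mktuple (X q1 n0 Hc)).
Qed.

Section Bwd.
Variables (q N n k : nat) (Hk : N <= k) (x : k.-tuple {ffun 'I_q -> 'I_n}).
Hypothesis Ch : r_chain (q - 1) x.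
Variable i0 : 'I_q.

Definition y (a : 'I_N) := tnth x (widen_ord Hk a).
Definition col : coloring q N :=
  [ffun e : 'I_N * 'I_N => if [pick i | y e.2 i <= y e.1 i] is Some i then i else i0].

Lemma edge (a b : 'I_N) i : a < b -> i != col (a, b) -> y a i < y b i.
Proof.
move=> ab; rewrite ffunE /=.
case: pickP => [j Hj|Hn] ic; last by rewrite ltnNge Hn.
have := Ch => /forallP /(_ (widen_ord Hk a)) /forallP /(_ (widen_ord Hk b)) /implyP.
move=> /(_ ab); rewrite /lt_r => Hc.
have Hs : [set i | tnth x (widen_ord Hk a) i < tnth x (widen_ord Hk b) i] \subset [set~ j].
  apply/subsetP => l; rewrite !inE; apply: contraTneq => ->.
  by rewrite -leqNgt.
have Hle := subset_leq_card Hs.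
have := subset_leqif_card Hs => [[_ E]].
have : [set~ j] \subset [set i | tnth x (widen_ord Hk a) i < tnth x (widen_ord Hk b) i].
  rewrite -E eqn_leq Hle /=; move: Hc; by rewrite cardsC1 card_ord subn1.
move/subsetP => /(_ i); rewrite !inE => /(_ ic); by rewrite /y.
Qed.

Lemma inc i (z : 'I_N) s : path (fun a b : 'I_N => (a < b)%N) z s ->
  i \notin path_colors col (z :: s) -> size s + y z i <= y (last z s) i.
Proof.
elim: s z => [|w s IH] z //= /andP[zw Hp].
rewrite pc_cons2 inE negb_or => /andP[ic Hc].
have := IH w Hp Hc; have := edge zw ic; lia.
Qed.

Lemma fK_le : 0 < n -> f_K (q - 1) col <= n.
Proof.
move=> n0; apply/bigmax_leqP => m /existsP[t /andP[So Hu]].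
rewrite -(size_tuple t); case: (tval t) So Hu => [//|z s] So Hu.
have [i Hi] : exists i, i \notin path_colors col (z :: s).
  case: (boolP [exists i, i \notin path_colors col (z :: s)]) => [/existsP//|/existsP Hn].
  exfalso.
  have : size (enum 'I_q) <= size (undup (path_colors col (z :: s))).
    apply: uniq_leq_size; first exact: enum_uniq.
    move=> i _; rewrite mem_undup; apply: contraT => Hi; exfalso; apply: Hn; by exists i.
  rewrite size_enum_ord; move: Hu; have : 0 < q by exact: (leq_ltn_trans (leq0n _) (ltn_ord i0)).
  lia.
have := inc So Hi; have := ltn_ord (y (last z s) i); rewrite /=; lia.
Qed.

End Bwd.

Lemma bigmin_le (I : eqType) (r : seq I) (F : I -> nat) d c :
  c \in r -> \big[minn/d]_(i <- r) F i <= F c.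
Proof.
elim: r => [//|z r IH]; rewrite inE big_cons => /orP[/eqP ->|/IH H].
  exact: geq_minl.
exact: leq_trans (geq_minr _ _) H.
Qed.

Theorem proposition3p1 (q N n : nat) :
  (2 <= q)%N -> (0 < N)%N -> (0 < n)%N ->
  (f_N q (q - 1) N <= n)%N <-> (N <= F_N q (q - 1) n)%N.
Proof.
move=> q2 N0 n0; split; first exact: fwd.
move=> HF; have [k /andP[/existsP[x Ch] Hk]] := maxex N0 HF.
have i0 : 'I_q := Ordinal (leq_trans (isT : 0 < 2) q2).
apply: leq_trans (fK_le Hk Ch i0 n0).
rewrite /f_N; apply: bigmin_le; exact: mem_index_enum.
Qed.
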